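(* Let $y_{1:n}$ be data, $\mathcal{C}$ a real-valued cost function on contiguous segments $y_{(a+1):b}$, $\beta>0$ a constant, and $f$ a concave differentiable real function (on an interval containing $\{0,1,\ldots,n-1\}$) with derivative $f'$. For a segmentation with $m$ changepoints $0=\tau_0<\tau_1<\cdots<\tau_m<\tau_{m+1}=n$ consider the criterion $$\beta f(m)+\sum_{i=1}^{m+1}\mathcal{C}(y_{(\tau_{i-1}+1):\tau_i}),$$ and let $\hat m$ be the value of $m$ for which this criterion is minimised (over all $m$ and changepoint positions). Then the optimal segmentation under this criterion is a segmentation that minimises, over all $m$ and changepoint positions, $$m\,\beta f'(\hat m)+\sum_{i=1}^{m+1}\mathcal{C}(y_{(\tau_{i-1}+1):\tau_i}).$$
   Context: Segments are $y_{(\tau_{i-1}+1):\tau_i}=(y_{\tau_{i-1}+1},\ldots,y_{\tau_i})$; changepoints are integers in $\{1,\ldots,n-1\}$. *)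

(* Defs.v *)
From HB Require Import structures.
From mathcomp Require Import all_boot all_order all_algebra.
From mathcomp Require Import all_classical all_reals all_analysis.
Set Implicit Arguments. Unset Strict Implicit. Unset Printing Implicit Defensive.
Import Order.TTheory GRing.Theory Num.Theory.
Local Open Scope ring_scope.

Definition is_seg (n : nat) (tau : seq nat) : bool :=
  sorted ltn tau && all (fun t => (0 < t < n)%N) tau.

(* segment y_{(a+1):b} of the data y = (y_1,...,y_n) *)
Definition segment (T : Type) (y : seq T) (a b : nat) : seq T :=
  drop a (take b y).

Definition seg_cost (R : numDomainType) (T : Type) (C : seq T -> R)
    (y : seq T) (tau : seq nat) : R :=
  \sum_(p <- zip (0%N :: tau) (rcons tau (size y))) C (segment y p.1 p.2).

Definition concave_on (R : realType) (a b : R) (f : R -> R) : Prop :=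
  forall x z t, a < x < b -> a < z < b -> 0 <= t <= 1 ->
    t * f x + (1 - t) * f z <= f (t * x + (1 - t) * z).

Definition crit_f (R : realType) (T : Type) (C : seq T -> R) (y : seq T)
    (beta : R) (f : R -> R) (tau : seq nat) : R :=
  beta * f (size tau)%:R + seg_cost C y tau.

Definition crit_lin (R : realType) (T : Type) (C : seq T -> R) (y : seq T)
    (beta : R) (f : R -> R) (mhat : nat) (tau : seq nat) : R :=
  (size tau)%:R * beta * derive1 f mhat%:R + seg_cost C y tau.

(* Main.v *)
Require Import Defs.
From HB Require Import structures.
From mathcomp Require Import all_boot all_order all_algebra.
From mathcomp Require Import all_classical all_reals all_analysis.
From mathcomp Require Import ring lra.
Import Order.TTheory GRing.Theory Num.Theory.
Local Open Scope ring_scope.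
Local Open Scope classical_set_scope.

Lemma seg_size n tau : is_seg n tau -> (size tau <= n.-1)%N.
Proof.
case/andP=> so al.
have u : uniq tau by apply: (sorted_uniq ltn_trans ltnn).
have -> : n.-1 = size (iota 1 n.-1) by rewrite size_iota.
apply: uniq_leq_size => // t ti.
move/allP: al => /(_ t ti) /andP[t0 tn].
rewrite mem_iota; apply/andP; split => //.
by rewrite add1n prednK // (leq_trans _ tn).
Qed.

Lemma tangent (R : realType) (f : R -> R) (a b x z : R) :
  concave_on a b f -> a < x < b -> a < z < b -> derivable f x 1 ->
  f z <= f x + derive1 f x * (z - x).
Proof.
move=> cf hx hz df.
have dfE : (fun h : R => h^-1 * (f (h + x) - f x)) @ 0^' --> derive1 f x.
  rewrite derive1E.
  move: df; rewrite /derivable /derive /=.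
  by under eq_fun do rewrite /= scaler1.
have dL : (fun h : R => h^-1 * (f (h + x) - f x)) @ 0^'- --> derive1 f x.
  apply: (cvg_trans _ dfE); apply: cvg_fmap2.
  move=> P /=; rewrite /dnbhs /within /=; apply: filterS => y H /lt_eqF yn.
  by apply: H; rewrite yn.
have dR : (fun h : R => h^-1 * (f (h + x) - f x)) @ 0^'+ --> derive1 f x.
  apply: (cvg_trans _ dfE); apply: cvg_fmap2.
  move=> P /=; rewrite /dnbhs /within /=; apply: filterS => y H /gt_eqF yn.
  by apply: H; rewrite yn.
have key : forall h, 0 < h / (z - x) < 1 ->
    h * ((f z - f x) / (z - x)) <= f (h + x) - f x.
  move=> h /andP[t0 t1].
  have zx : z - x != 0 by apply: contraTneq t0 => ->; rewrite invr0 mulr0 ltxx.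
  have := cf z x (h / (z - x)) hz hx.
  rewrite (ltW t0) (ltW t1) => /(_ isT).
  have -> : h / (z - x) * z + (1 - h / (z - x)) * x = h + x.
    by field.
  move=> H.
  have -> : h * ((f z - f x) / (z - x)) = h / (z - x) * f z + (1 - h / (z - x)) * f x - f x.
    by field.
  by rewrite lerD2r.
case: (ltgtP z x) => [zx|xz|->]; last by rewrite subrr mulr0 addr0.
-
  have zx0 : z - x < 0 by rewrite subr_lt0.
  have L : derive1 f x <= (f z - f x) / (z - x).
    apply: (cvgr_to_le dL).
    near=> h.
    have h0 : h < 0 by near: h; exact: nbhs_left_lt.
    have h1 : z - x < h by near: h; exact: nbhs_left_gt.
    have := key h.
    rewrite ltr_ndivrMr // ltr_ndivlMr // mul1r mul0r h0 h1 /= => /(_ isT) K.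
    by rewrite ler_ndivrMl ?invr_lt0 // invrK mulrC.
  rewrite -lerBlDl -ler_ndivlMr //.
- have zx0 : 0 < z - x by rewrite subr_gt0.
  have L : (f z - f x) / (z - x) <= derive1 f x.
    apply: (cvgr_to_ge dR).
    near=> h.
    have h0 : 0 < h by near: h; exact: nbhs_right_gt.
    have h1 : h < z - x by near: h; exact: nbhs_right_lt.
    have := key h.
    rewrite divr_gt0 // ltr_pdivrMr // mul1r h1 /= => /(_ isT) K.
    by rewrite ler_pdivlMl ?invr_gt0 // invrK mulrC.
  by rewrite -lerBlDl -ler_pdivrMr.
Unshelve. all: by end_near.
Qed.

Theorem theorem3 (R : realType) (T : Type) (y : seq T) (C : seq T -> R)
    (beta : R) (f : R -> R) (a b : R) :
  (0 < size y)%N -> 0 < beta ->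
  a < 0 -> (size y).-1%:R < b ->
  concave_on a b f ->
  (forall x, a < x < b -> derivable f x 1) ->
  forall tauhat : seq nat, is_seg (size y) tauhat ->
  (forall tau, is_seg (size y) tau ->
     crit_f C y beta f tauhat <= crit_f C y beta f tau) ->
  forall tau, is_seg (size y) tau ->
     crit_lin C y beta f (size tauhat) tauhat
       <= crit_lin C y beta f (size tauhat) tau.
Proof.
move=> y0 b0 a0 nb cf df th sh opt tau st.
have inab : forall t, is_seg (size y) t -> a < (size t)%:R < b.
  move=> t /seg_size st'; apply/andP; split.
    by apply: (lt_le_trans a0).
  by apply: le_lt_trans nb; rewrite ler_nat.
have := opt tau st; rewrite /crit_f /crit_lin.
have := @tangent R f a b _ _ cf (inab _ sh) (inab _ st) (df _ (inab _ sh)).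
set D := derive1 f _; set S1 := seg_cost _ _ _; set S2 := seg_cost _ _ _.
set m := (size tau)%:R; set mh := (size th)%:R.
move=> Ht Hopt.
have Hb : beta * f m <= beta * (f mh + D * (m - mh)) by rewrite ler_pM2l.
have Hc : beta * f m - beta * f mh <= m * beta * D - mh * beta * D.
  have -> : m * beta * D - mh * beta * D = beta * (f mh + D * (m - mh)) - beta * f mh by ring.
  by rewrite lerD2r.
move: Hc Hopt; clear Ht Hb.
move: (beta * f m) (beta * f mh) (m * beta * D) (mh * beta * D) S1 S2 => p q r s u v.
lra.
Qed.
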